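(* Let $(K,\succ)$ be an ordered field and $\Gamma=(V,\rho,a_0,B)$ an infinite network over $K$. For $n\in\mathbb N$ let $V_n=\{x\in V:\operatorname{dist}(a_0,x)\le n\}$, $\partial V_n=\{x\in V:\operatorname{dist}(a_0,x)=n\}$, $B_n=B\cap V_n$, and let $\Gamma_n=(V_n,\rho|_{V_n},a_0,B_n\cup\partial V_n)$ be the finite network on the induced subgraph on $V_n$ with the restricted admittances. Then for every $n\in\mathbb N$, $$\mathcal P_{eff}(\Gamma_{n+1})\preceq \mathcal P_{eff}(\Gamma_n).$$
   Context: A network over an ordered field $(K,\succ)$ is $\Gamma=(V,\rho,a_0,B)$: $(V,E)$ a locally finite connected graph with $|V|\ge2$, $\rho:E\to K$ positive (admittance), $a_0\in V$, $B\subseteq V\setminus\{a_0\}$ nonempty; infinite if $|V|=\infty$. Set $\rho_{xy}=0$ if $xy$ is not an edge; $x\sim y$ means $xy$ is an edge; $\operatorname{dist}$ is the graph distance. For a finite network, the Dirichlet problem is: $v:V\to K$ with $\sum_y(v(y)-v(x))\rho_{xy}=0$ for $x\notin B\cup\{a_0\}$, $v=0$ on $B$, $v(a_0)=1$; it has a unique solution. The effective admittance of a finite network is $\mathcal P_{eff}(\Gamma)=\sum_{x\sim a_0}(1-v(x))\rho_{xa_0}$ with $v$ this solution. $\preceq$ denotes the order of $K$. *)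

(* Defs.v *)
From HB Require Import structures.
From mathcomp Require Import all_boot all_order all_algebra.
From Stdlib Require Import ClassicalEpsilon.
Set Implicit Arguments. Unset Strict Implicit. Unset Printing Implicit Defensive.
Import Order.TTheory GRing.Theory Num.Theory.
Local Open Scope ring_scope.

(* The graph is given by neighbour lists (local finiteness): y is adjacent
   to x iff y \in nbrs x.  rho is the admittance, extended by 0 off edges. *)
Record network (K : realFieldType) (V : eqType) := Network {
  nbrs : V -> seq V;
  rho : V -> V -> K;
  a0 : V;
  B : pred V;
  nbrs_uniq : forall x, uniq (nbrs x);
  nbrs_sym : forall x y, (y \in nbrs x) = (x \in nbrs y);
  nbrs_irrefl : forall x, x \notin nbrs x;
  rho_sym : forall x y, rho x y = rho y x;
  rho_pos : forall x y, y \in nbrs x -> 0 < rho x y;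
  rho_off : forall x y, y \notin nbrs x -> rho x y = 0;
  connected : forall x y, exists s : seq V, path (fun u w => w \in nbrs u) x s /\ last x s = y;
  B_nonempty : exists b, B b;
  a0_notin_B : ~~ B a0;
}.

Definition infinite_network (K : realFieldType) (V : eqType) (G : network K V) : Prop :=
  ~ exists s : seq V, forall x, x \in s.

(* ball G n x  <=>  dist(a0, x) <= n  (graph distance) *)
Fixpoint ball (K : realFieldType) (V : eqType) (G : network K V) (n : nat) : pred V :=
  match n with
  | 0 => pred1 (a0 G)
  | m.+1 => fun x => ball G m x || has (ball G m) (nbrs G x)
  end.

Definition sphere (K : realFieldType) (V : eqType) (G : network K V) (n : nat) : pred V :=
  fun x => ball G n x && ((n == 0)%N || ~~ ball G n.-1 x).

(* Dirichlet problem on the finite network with vertex set S (induced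
   subgraph, restricted admittances), root a0 and boundary set Bd. *)
Definition is_dirichlet_sol (K : realFieldType) (V : eqType) (G : network K V)
    (S Bd : pred V) (v : V -> K) : Prop :=
  v (a0 G) = 1 /\
  (forall x, S x -> Bd x -> v x = 0) /\
  (forall x, S x -> x != a0 G -> ~~ Bd x ->
     \sum_(y <- nbrs G x | S y) (v y - v x) * rho G x y = 0).

Definition Peff (K : realFieldType) (V : eqType) (G : network K V) (S Bd : pred V) : K :=
  let v := epsilon (inhabits (fun _ : V => (0 : K))) (is_dirichlet_sol G S Bd) in
  \sum_(y <- nbrs G (a0 G) | S y) (1 - v y) * rho G (a0 G) y.

Definition Gamma_bdry (K : realFieldType) (V : eqType) (G : network K V) (n : nat) : pred V :=
  fun x => (B G x && ball G n x) || sphere G n x.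

Definition Peff_n (K : realFieldType) (V : eqType) (G : network K V) (n : nat) : K :=
  Peff G (ball G n) (Gamma_bdry G n).

(* Main.v *)
Require Import Defs.
From mathcomp Require Import all_boot all_order all_algebra.
From Stdlib Require Import ClassicalEpsilon.
From mathcomp Require Import ring.
Import Order.TTheory GRing.Theory Num.Theory.
Local Open Scope ring_scope.



Lemma rho_ge0 {K : realFieldType} {V : eqType} (G : network K V) x y :
  0 <= rho G x y.
Proof.
case: (boolP (y \in nbrs G x)) => h; first by apply: ltW; apply: rho_pos.
by rewrite rho_off.
Qed.

Lemma psum_seq_eq0 {K : realFieldType} {I : eqType} (r : seq I) (P : pred I) (F : I -> K) :
  (forall i, P i -> 0 <= F i) -> \sum_(i <- r | P i) F i = 0 ->
  forall i, i \in r -> P i -> F i = 0.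
Proof.
move=> H0; elim: r => [|a r IH] //=.
rewrite big_cons => hs i; rewrite inE => /orP [/eqP -> | ir] Pi.
  move: hs; rewrite Pi => /eqP; rewrite paddr_eq0 ?H0 //; last exact: sumr_ge0.
  by case/andP => /eqP.
apply: IH => //; move: hs; case: ifP => Pa //.
move/eqP; rewrite paddr_eq0 ?H0 //; last exact: sumr_ge0.
by case/andP => _ /eqP.
Qed.

Lemma sum_delta {K : realFieldType} {I : eqType} (t : seq I) (P : pred I) (F : I -> K) z :
  uniq t -> z \in t -> P z -> \sum_(y <- t | P y) (y == z)%:R * F y = F z.
Proof.
move=> ut zt Pz; rewrite big_mkcond (bigD1_seq z) //= Pz eqxx mul1r big1 ?addr0 //.
by move=> i /negbTE ->; case: ifP; rewrite ?mul0r.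
Qed.

Lemma nbrs_to_t {K : realFieldType} {V : eqType} (G : network K V) {t : seq V} {S : pred V}
  (ut : uniq t) (St : forall x, S x -> x \in t) x (F : V -> K) :
  \sum_(y <- nbrs G x | S y) F y * rho G x y = \sum_(y <- t | S y) F y * rho G x y.
Proof.
have -> : \sum_(y <- t | S y) F y * rho G x y =
    \sum_(y <- t | S y && (y \in nbrs G x)) F y * rho G x y.
  rewrite [LHS]big_mkcond [RHS]big_mkcond; apply: eq_bigr => y _.
  case: (S y) => //=; case: ifP => // /negbT ny; by rewrite rho_off ?mulr0.
have -> : \sum_(y <- nbrs G x | S y) F y * rho G x y =
    \sum_(y <- nbrs G x | S y && (y \in t)) F y * rho G x y.
  by apply: eq_bigl => y; case Sy: (S y); rewrite ?(St y Sy).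
rewrite -[LHS]big_filter -[RHS]big_filter; apply: perm_big; apply: uniq_perm.
- by apply: filter_uniq; apply: nbrs_uniq.
- by apply: filter_uniq.
by move=> y; rewrite !mem_filter; case: (S y); case: (y \in t); case: (y \in nbrs G x).
Qed.

Definition lap {K : realFieldType} {V : eqType} (G : network K V) (t : seq V) (S : pred V)
  (g : V -> K) x := \sum_(y <- t | S y) (g y - g x) * rho G x y.

Definition dform {K : realFieldType} {V : eqType} (G : network K V) (t : seq V) (S : pred V)
  (f g : V -> K) := \sum_(x <- t | S x) \sum_(y <- t | S y) (f x - f y) * (g x - g y) * rho G x y.

Lemma green {K : realFieldType} {V : eqType} (G : network K V) (t : seq V) (S : pred V) f g :
  dform G t S f g = - 2%:R * \sum_(x <- t | S x) f x * lap G t S g x.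
Proof.
rewrite /dform /lap.
set T := \sum_(x <- t | S x) f x * _.
have E1 : T = \sum_(x <- t | S x) \sum_(y <- t | S y) f x * (g y - g x) * rho G x y.
  by apply: eq_bigr => x _; rewrite mulr_sumr; apply: eq_bigr => y _; rewrite mulrA.
have E2 : T = \sum_(x <- t | S x) \sum_(y <- t | S y) f y * (g x - g y) * rho G x y.
  by rewrite E1 exchange_big /=; apply: eq_bigr => x _; apply: eq_bigr => y _; rewrite rho_sym.
have -> : - 2%:R * T = - (T + T) by rewrite mulNr mulr2n mulrDl mul1r.
rewrite {1}E1 {1}E2 -big_split -sumrN /=; apply: eq_bigr => x _.
rewrite -big_split -sumrN /=; apply: eq_bigr => y _.
by ring.
Qed.

Definition Pval {K : realFieldType} {V : eqType} (G : network K V) (S : pred V) (v : V -> K) :=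
  \sum_(y <- nbrs G (a0 G) | S y) (1 - v y) * rho G (a0 G) y.

Lemma dir_lap {K : realFieldType} {V : eqType} (G : network K V) {t : seq V} {S Bd : pred V} {v}
  (ut : uniq t) (St : forall x, S x -> x \in t) :
  is_dirichlet_sol G S Bd v -> forall x, S x -> x != a0 G -> ~~ Bd x -> lap G t S v x = 0.
Proof.
move=> [_ [_ H]] x Sx xa Bx; rewrite /lap -(nbrs_to_t G ut St x (fun y => v y - v x)).
exact: H.
Qed.

Lemma Pval_lap {K : realFieldType} {V : eqType} (G : network K V) {t : seq V} {S Bd : pred V} {v}
  (ut : uniq t) (St : forall x, S x -> x \in t) :
  is_dirichlet_sol G S Bd v -> Pval G S v = - lap G t S v (a0 G).
Proof.
move=> [va _]; rewrite /Pval /lap (nbrs_to_t G ut St (a0 G) (fun y => 1 - v y)) -sumrN.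
by apply: eq_bigr => y _; rewrite va -mulNr opprB.
Qed.

Lemma dform_adm {K : realFieldType} {V : eqType} (G : network K V) {t : seq V} {S Bd : pred V} {v f}
  (ut : uniq t) (St : forall x, S x -> x \in t) (Sa : S (a0 G)) :
  is_dirichlet_sol G S Bd v -> f (a0 G) = 1 -> (forall x, S x -> Bd x -> f x = 0) ->
  dform G t S f v = 2%:R * Pval G S v.
Proof.
move=> sol fa fB; rewrite green (Pval_lap G ut St sol) mulrN mulNr; congr (- (_ * _)).
rewrite big_mkcond (bigD1_seq (a0 G)) ?St //= Sa fa mul1r big1 ?addr0 //.
move=> x xa; case Sx: (S x) => //; case Bx: (Bd x); first by rewrite fB ?mul0r.
by rewrite (dir_lap G ut St sol) ?Bx ?mulr0.
Qed.

Lemma dform_ge0 {K : realFieldType} {V : eqType} (G : network K V) (t : seq V) (S : pred V) h :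
  0 <= dform G t S h h.
Proof.
apply: sumr_ge0 => x _; apply: sumr_ge0 => y _.
by rewrite mulr_ge0 ?rho_ge0 // -expr2 sqr_ge0.
Qed.

Lemma dform_expand {K : realFieldType} {V : eqType} (G : network K V) (t : seq V) (S : pred V) f v :
  dform G t S (fun x => f x - v x) (fun x => f x - v x) =
  dform G t S f f + (- 2%:R) * dform G t S f v + dform G t S v v.
Proof.
rewrite /dform mulr_sumr -big_split -big_split /=; apply: eq_bigr => x _.
rewrite mulr_sumr -big_split -big_split /=; apply: eq_bigr => y _.
ring.
Qed.

Lemma energy_bound {K : realFieldType} {V : eqType} (G : network K V) {t : seq V} {S Bd : pred V} {v f}
  (ut : uniq t) (St : forall x, S x -> x \in t) (Sa : S (a0 G)) :
  is_dirichlet_sol G S Bd v -> f (a0 G) = 1 -> (forall x, S x -> Bd x -> f x = 0) ->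
  2%:R * Pval G S v <= dform G t S f f.
Proof.
move=> sol fa fB.
have e1 := dform_adm G ut St Sa sol fa fB.
have e2 : dform G t S v v = 2%:R * Pval G S v.
  by case: (sol) => va [vB _]; apply: (dform_adm G ut St Sa sol va vB).
have := dform_ge0 G t S (fun x => f x - v x); rewrite dform_expand e1 e2.
move=> h; rewrite -subr_ge0; apply: le_trans h _; rewrite le_eqVlt; apply/orP; left; apply/eqP.
ring.
Qed.



Definition intl {K : realFieldType} {V : eqType} (G : network K V) (t : seq V) (S Bd : pred V) :=
  [seq x <- t | S x && (x != a0 G) && ~~ Bd x].

Definition vf {K : realFieldType} {V : eqType} (G : network K V) {I : seq V}
  (c : 'rV[K]_(size I)) (al : K) (x : V) : K :=
  (x == a0 G)%:R * al + \sum_(j < size I) (nth (a0 G) I j == x)%:R * c 0 j.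

Definition degS {K : realFieldType} {V : eqType} (G : network K V) (t : seq V) (S : pred V) x :=
  \sum_(y <- t | S y) rho G x y.

Definition Amx {K : realFieldType} {V : eqType} (G : network K V) (t : seq V) (S : pred V)
  (I : seq V) : 'M[K]_(size I) :=
  \matrix_(j, i) (rho G (nth (a0 G) I i) (nth (a0 G) I j) - (j == i)%:R * degS G t S (nth (a0 G) I i)).

Lemma vf_nth {K : realFieldType} {V : eqType} (G : network K V) (I : seq V) c al (i : 'I_(size I)) :
  uniq I -> a0 G \notin I -> vf G c al (nth (a0 G) I i) = c 0 i.
Proof.
move=> uI aI; rewrite /vf.
have -> : (nth (a0 G) I i == a0 G) = false.
  by apply/negbTE; apply: contraNneq aI => <-; rewrite mem_nth.
rewrite mul0r add0r (bigD1 i) //= eqxx mul1r big1 ?addr0 // => j ji.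
rewrite nth_uniq //; have -> : (j == i :> nat) = false by apply/negbTE.
by rewrite mul0r.
Qed.

Lemma vf_notin {K : realFieldType} {V : eqType} (G : network K V) (I : seq V) (c : 'rV[K]_(size I)) al x :
  x \notin I -> vf G c al x = (x == a0 G)%:R * al.
Proof.
move=> xI; rewrite /vf big1 ?addr0 // => j _.
have -> : (nth (a0 G) I j == x) = false.
  by apply/negbTE; apply: contraNneq xI => <-; rewrite mem_nth.
by rewrite mul0r.
Qed.

Lemma intl_props {K : realFieldType} {V : eqType} (G : network K V) (t : seq V) (S Bd : pred V) :
  uniq t -> [/\ uniq (intl G t S Bd), a0 G \notin intl G t S Bd &
     forall y, y \in intl G t S Bd -> [/\ y \in t, S y, y != a0 G & ~~ Bd y]].
Proof.
move=> ut; split; first exact: filter_uniq.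
  by rewrite mem_filter eqxx andbF.
by move=> y; rewrite mem_filter => /andP [/andP [/andP [-> ->] ->] ->].
Qed.

Lemma harm_mx {K : realFieldType} {V : eqType} (G : network K V) (t : seq V) (S Bd : pred V)
  (ut : uniq t) (St : forall x, S x -> x \in t) (Sa : S (a0 G)) (c : 'rV[K]_(size (intl G t S Bd))) al
  (i : 'I_(size (intl G t S Bd))) :
  lap G t S (vf G c al) (nth (a0 G) (intl G t S Bd) i) =
  (c *m Amx G t S (intl G t S Bd)) 0 i + al * rho G (nth (a0 G) (intl G t S Bd) i) (a0 G).
Proof.
have [uI aI mI] := intl_props G t S Bd ut.
move: c i; set I := intl G t S Bd => c i.
set x := nth (a0 G) I i.
have at_ : a0 G \in t := St _ Sa.
rewrite /lap.
have e1 : \sum_(y <- t | S y) (vf G c al y - vf G c al x) * rho G x y =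
   \sum_(y <- t | S y) vf G c al y * rho G x y - vf G c al x * degS G t S x.
  by rewrite /degS mulr_sumr -sumrB; apply: eq_bigr => y _; ring.
have e2 : \sum_(y <- t | S y) vf G c al y * rho G x y =
   al * rho G x (a0 G) + \sum_(j < size I) c 0 j * rho G x (nth (a0 G) I j).
  transitivity (\sum_(y <- t | S y) (y == a0 G)%:R * (al * rho G x y) +
     \sum_(j < size I) \sum_(y <- t | S y) (y == nth (a0 G) I j)%:R * (c 0 j * rho G x y)).
    rewrite [X in _ = _ + X]exchange_big /= -big_split /=; apply: eq_bigr => y _.
    rewrite /vf mulrDl mulr_suml; congr (_ + _); first by ring.
    by apply: eq_bigr => j _; rewrite eq_sym; ring.
  rewrite sum_delta //; congr (_ + _); apply: eq_bigr => j _.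
  have [jt Sj _ _] := mI _ (mem_nth (a0 G) (ltn_ord j)).
  by rewrite sum_delta.
have e3 : (c *m Amx G t S I) 0 i =
   \sum_(j < size I) c 0 j * rho G x (nth (a0 G) I j) - c 0 i * degS G t S x.
  rewrite mxE; under eq_bigr do rewrite mxE.
  rewrite (eq_bigr (fun j => c 0 j * rho G x (nth (a0 G) I j) - c 0 j * ((j == i)%:R * degS G t S x))); last first.
    by move=> j _; rewrite mulrBr.
  rewrite sumrB; congr (_ - _).
  rewrite (bigD1 i) //= eqxx mul1r big1 ?addr0 // => j /negbTE ->.
  by rewrite mul0r mulr0.
by rewrite e1 e2 e3 /x vf_nth //; ring.
Qed.

Lemma Amx_inj {K : realFieldType} {V : eqType} (G : network K V) (t : seq V) (S Bd : pred V)
  (ut : uniq t) (St : forall x, S x -> x \in t) (Sa : S (a0 G))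
  (conn : forall w : V -> K, (forall x y, S x -> S y -> y \in nbrs G x -> w x = w y) ->
          forall x, S x -> w x = w (a0 G))
  (c : 'rV[K]_(size (intl G t S Bd))) :
  c *m Amx G t S (intl G t S Bd) = 0 -> c = 0.
Proof.
move=> cA.
have [uI aI mI] := intl_props G t S Bd ut.
set w := vf G c 0.
have hw : forall x, S x -> w x * lap G t S w x = 0.
  move=> x Sx; case: (boolP (x \in intl G t S Bd)) => xI; last first.
    by rewrite /w vf_notin // mulr0 mul0r.
  have ii : (index x (intl G t S Bd) < size (intl G t S Bd))%N by rewrite index_mem.
  have xe : nth (a0 G) (intl G t S Bd) (Ordinal ii) = x := nth_index _ xI.
  by rewrite -xe /w harm_mx // cA mxE mul0r addr0 mulr0.
have D0 : dform G t S w w = 0.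
  by rewrite green big1 ?mulr0 // => x Sx; apply: hw.
have edge : forall x y, S x -> S y -> y \in nbrs G x -> w x = w y.
  move=> x y Sx Sy yx.
  have tge : forall x y, 0 <= (w x - w y) * (w x - w y) * rho G x y.
    by move=> x' y'; rewrite mulr_ge0 ?rho_ge0 // -expr2 sqr_ge0.
  have h1 := @psum_seq_eq0 _ _ t S _ (fun x' _ => sumr_ge0 _ (fun y' _ => tge x' y')) D0 x (St _ Sx) Sx.
  have h2 := @psum_seq_eq0 _ _ t S _ (fun y' _ => tge x y') h1 y (St _ Sy) Sy.
  move/eqP: h2; rewrite mulf_eq0 (gt_eqF (rho_pos yx)) orbF mulf_eq0 orbb subr_eq0.
  by move/eqP.
have wa : w (a0 G) = 0 by rewrite /w vf_notin // mulr0.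
apply/rowP => i; rewrite mxE.
have [_ Si _ _] := mI _ (mem_nth (a0 G) (ltn_ord i)).
by rewrite -(vf_nth G (intl G t S Bd) c 0 i uI aI) -/w (conn w edge _ Si) wa.
Qed.

Lemma dir_exists {K : realFieldType} {V : eqType} (G : network K V) (t : seq V) (S Bd : pred V)
  (ut : uniq t) (St : forall x, S x -> x \in t) (Sa : S (a0 G)) (nBa : ~~ Bd (a0 G))
  (conn : forall w : V -> K, (forall x y, S x -> S y -> y \in nbrs G x -> w x = w y) ->
          forall x, S x -> w x = w (a0 G)) :
  exists v, is_dirichlet_sol G S Bd v.
Proof.
have [uI aI mI] := intl_props G t S Bd ut.
set I := intl G t S Bd in uI aI mI *.
set A := Amx G t S I.
have Au : A \in unitmx.
  rewrite -row_free_unit -kermx_eq0; apply/eqP; apply/row_matrixP => i; rewrite row0.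
  apply: (Amx_inj G t S Bd ut St Sa conn).
  by rewrite -row_mul mulmx_ker row0.
set b : 'rV[K]_(size I) := \row_i (- rho G (nth (a0 G) I i) (a0 G)).
set c := b *m invmx A.
have cA : c *m A = b by rewrite /c mulmxKV.
exists (vf G c 1); split; first by rewrite vf_notin // eqxx mul1r.
split.
  move=> x Sx Bx; rewrite vf_notin; last by apply: contraL Bx => /mI [].
  have -> : (x == a0 G) = false by apply: contraTF Bx => /eqP ->.
  by rewrite mul0r.
move=> x Sx xa Bx.
rewrite (nbrs_to_t G ut St x (fun y => vf G c 1 y - vf G c 1 x)) -/(lap G t S (vf G c 1) x).
have xI : x \in I by rewrite /I /intl mem_filter Sx xa Bx (St _ Sx).
have ii : (index x I < size I)%N by rewrite index_mem.
have xe : nth (a0 G) I (Ordinal ii) = x := nth_index _ xI.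
by rewrite -xe harm_mx // cA mxE mul1r addNr.
Qed.



Fixpoint bseqG {K : realFieldType} {V : eqType} (G : network K V) (m : nat) : seq V :=
  match m with
  | 0 => [:: a0 G]
  | m'.+1 => bseqG G m' ++ flatten (map (nbrs G) (bseqG G m'))
  end.

Lemma ball_bseq {K : realFieldType} {V : eqType} (G : network K V) m x :
  ball G m x -> x \in bseqG G m.
Proof.
elim: m x => [|m IH] x /=; first by rewrite inE.
rewrite mem_cat => /orP [/IH -> //| /hasP [y yx by_]].
apply/orP; right; apply/flatten_mapP; exists y; first exact: IH.
by rewrite nbrs_sym.
Qed.

Lemma ball_S {K : realFieldType} {V : eqType} (G : network K V) m x :
  ball G m x -> ball G m.+1 x.
Proof. by rewrite /= => ->. Qed.

Lemma ball_a0 {K : realFieldType} {V : eqType} (G : network K V) m : ball G m (a0 G).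
Proof. by elim: m => [|m IH] /=; rewrite ?eqxx ?IH. Qed.

Lemma ball_le {K : realFieldType} {V : eqType} (G : network K V) m n x :
  (m <= n)%N -> ball G m x -> ball G n x.
Proof.
elim: n => [|n IH]; first by rewrite leqn0 => /eqP ->.
rewrite leq_eqVlt => /orP [/eqP -> //| mn] bm.
by apply: ball_S; apply: IH.
Qed.

Lemma ball_conn {K : realFieldType} {V : eqType} (G : network K V) n (w : V -> K) :
  (forall x y, ball G n x -> ball G n y -> y \in nbrs G x -> w x = w y) ->
  forall x, ball G n x -> w x = w (a0 G).
Proof.
move=> E.
suff H : forall m, (m <= n)%N -> forall x, ball G m x -> w x = w (a0 G).
  by move=> x; apply: H.
elim=> [|m IH] mn x /=; first by move/eqP ->.
have mn' : (m <= n)%N by apply: ltnW.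
case/orP => [|/hasP [y yx by_]]; first exact: IH.
rewrite (E x y) ?(IH mn' y by_) //.
  by apply: (ball_le G _ _ _ mn) => /=; apply/orP; right; apply/hasP; exists y.
exact: (ball_le G _ _ _ mn').
Qed.

Lemma bdry_a0 {K : realFieldType} {V : eqType} (G : network K V) n :
  (0 < n)%N -> ~~ Gamma_bdry G n (a0 G).
Proof.
case: n => // n _; rewrite /Gamma_bdry /sphere (negbTE (a0_notin_B G)) /=.
by rewrite (ball_a0 G n) andbF.
Qed.

Lemma sol_exists {K : realFieldType} {V : eqType} (G : network K V) n :
  (0 < n)%N -> exists v, is_dirichlet_sol G (ball G n) (Gamma_bdry G n) v.
Proof.
move=> n0.
apply: (@dir_exists K V G (undup (bseqG G n))) => //.
- exact: undup_uniq.
- by move=> x bx; rewrite mem_undup; apply: ball_bseq.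
- exact: ball_a0.
- exact: bdry_a0.
- exact: ball_conn.
Qed.



Lemma dsum_cond {K : realFieldType} {V : eqType} (t : seq V) (P : pred V) (F : V -> V -> K) :
  \sum_(x <- t | P x) \sum_(y <- t | P y) F x y =
  \sum_(x <- t) \sum_(y <- t) (if P x && P y then F x y else 0).
Proof.
rewrite big_mkcond; apply: eq_bigr => x _; case: (P x) => /=.
  by rewrite big_mkcond.
by rewrite big1.
Qed.

Lemma sph {K : realFieldType} {V : eqType} (G : network K V) n x y :
  (0 < n)%N -> ball G n x -> ~~ ball G n y -> y \in nbrs G x -> Gamma_bdry G n x.
Proof.
case: n => // n _ bx bny yx; rewrite /Gamma_bdry /sphere bx /=; apply/orP; right.
apply: contra bny => bnx /=; apply/orP; right; apply/hasP; exists x => //.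
by rewrite nbrs_sym.
Qed.

Theorem mainTheorem7 (K : realFieldType) (V : eqType) (G : network K V)
    (Ginf : infinite_network G) (n : nat) (n_pos : (0 < n)%N) :
  Peff_n G n.+1 <= Peff_n G n.
Proof.
rewrite /Peff_n /Peff.
set u := epsilon _ (is_dirichlet_sol G (ball G n) (Gamma_bdry G n)).
set w := epsilon _ (is_dirichlet_sol G (ball G n.+1) (Gamma_bdry G n.+1)).
have solu : is_dirichlet_sol G (ball G n) (Gamma_bdry G n) u.
  by apply: epsilon_spec; apply: sol_exists.
have solw : is_dirichlet_sol G (ball G n.+1) (Gamma_bdry G n.+1) w.
  by apply: epsilon_spec; apply: sol_exists.
change (Pval G (ball G n.+1) w <= Pval G (ball G n) u).
set t := undup (bseqG G n.+1).
have ut : uniq t by apply: undup_uniq.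
have St1 : forall x, ball G n.+1 x -> x \in t.
  by move=> x bx; rewrite mem_undup; apply: ball_bseq.
have St0 : forall x, ball G n x -> x \in t.
  by move=> x bx; apply: St1; apply: ball_S.
set f := fun x => if ball G n x then u x else 0.
case: (solu) => ua [uB _].
have fa : f (a0 G) = 1 by rewrite /f (ball_a0 G n).
have fB : forall x, ball G n.+1 x -> Gamma_bdry G n.+1 x -> f x = 0.
  move=> x b1 bd; rewrite /f; case bx: (ball G n x) => //.
  apply: (uB x); first by rewrite bx.
  move: bd; rewrite /Gamma_bdry /sphere /= bx /= ?andbT ?andbF ?orbF => ->.
  by [].
have h1 := energy_bound G ut St1 (ball_a0 G n.+1) solw fa fB.
have h0 := dform_adm G ut St0 (ball_a0 G n) solu ua uB.
have Z : forall x y, ball G n x -> ~~ ball G n y -> u x * rho G x y = 0.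
  move=> x y bx bny; case: (boolP (y \in nbrs G x)) => yx.
    by rewrite (uB x bx (sph G n x y n_pos bx bny yx)) mul0r.
  by rewrite rho_off // mulr0.
have EQ : dform G t (ball G n.+1) f f = dform G t (ball G n) u u.
  rewrite /dform dsum_cond [RHS]dsum_cond; apply: eq_bigr => x _; apply: eq_bigr => y _.
  rewrite /f; case bx: (ball G n x); case by_: (ball G n y).
  - by rewrite (ball_S G n x bx) (ball_S G n y by_).
  - rewrite andbF; case: ifP => // _.
    have := Z x y bx; rewrite by_ => /(_ isT) zz.
    by rewrite subr0 -mulrA zz mulr0.
  - rewrite andbT; case: ifP => // _.
    have := Z y x by_; rewrite bx => /(_ isT) zz.
    by rewrite sub0r mulrNN -mulrA rho_sym zz mulr0.
  - by rewrite andbF; case: ifP => // _; rewrite subrr !mul0r.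
rewrite EQ h0 in h1.
by rewrite -(ler_pM2l (_ : 0 < 2%:R)) // ltr0Sn.
Qed.
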